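(* Let $n\geq m\geq 1$ be integers, and let $\mathcal{A}=\{H_1,\ldots,H_m\}$ be a toric arrangement in $(\mathbb{C}^{*})^n$, where $$H_i=\{(z_1,\ldots,z_n)\in(\mathbb{C}^* )^n : z_1^{p_{i,1}}\cdots z_n^{p_{i,n}}=\alpha_i\},\qquad p_{i,j}\in\mathbb{Z},\ \alpha_i\in\mathbb{C}^*,$$ for $1\leq i\leq m$, $1\leq j\leq n$. Let $\tilde{M}_{\mathcal{A}}=(p_{i,j})\in M_{m,n}(\mathbb{Z})$ be its associated matrix. If $\tilde{M}_{\mathcal{A}}$ has rank $m$, then there exists a centered toric arrangement $\mathcal{B}=\{T_1,\ldots,T_m\}$ in $(\mathbb{C}^* )^n$ such that the complement manifolds $M(\mathcal{A})$ and $M(\mathcal{B})$ are diffeomorphic.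
   Context: A toric arrangement in $(\mathbb{C}^* )^n$ is a finite collection of subtori of the form $\{(z_1,\ldots,z_n)\in(\mathbb{C}^* )^n : z_1^{q_1}\cdots z_n^{q_n}=\beta\}$ with $q_j\in\mathbb{Z}$, $\beta\in\mathbb{C}^*$. Its complement manifold $M(\cdot)$ is $(\mathbb{C}^* )^n$ minus the union of its subtori. The associated matrix of the arrangement $\{H_1,\dots,H_m\}$ is the $m\times n$ integer matrix whose $i$-th row is the exponent vector $(p_{i,1},\ldots,p_{i,n})$ of $H_i$. A toric arrangement is centered if all the constants $\beta$ on the right-hand sides of its defining equations equal $1$. *)

(* Defs.v *)
From HB Require Import structures.
From mathcomp Require Import all_boot all_order all_algebra.
From mathcomp Require Import all_classical all_reals all_analysis.
From mathcomp Require Import complex.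
Set Implicit Arguments. Unset Strict Implicit. Unset Printing Implicit Defensive.
Import Order.TTheory GRing.Theory Num.Theory.
Import numFieldNormedType.Exports.
Local Open Scope classical_set_scope.
Local Open Scope ring_scope.

(* Complex numbers are modelled by R[i] for an arbitrary realType R;
   points of C^n are row vectors 'rV[R[i]]_n. *)

Definition monomial (R : realType) (n : nat) (p : 'rV[int]_n) (z : 'rV[R[i]]_n)
  : R[i] := \prod_(j < n) (z 0 j) ^ (p 0 j).

Definition torus (R : realType) (n : nat) : set 'rV[R[i]]_n :=
  [set z | forall j, z 0 j != 0].

(* The toric arrangement {H_1..H_m}, H_i = {z in (C^* )^n | z^{P_i} = alpha_i},
   given by its associated matrix P (row i = exponent vector of H_i) and
   the constants alpha. Its complement manifold: *)
Definition complement (R : realType) (m n : nat) (P : 'M[int]_(m, n))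
  (alpha : 'I_m -> R[i]) : set 'rV[R[i]]_n :=
  [set z | torus z /\ forall i : 'I_m, monomial (row i P) z != alpha i].

Definition realify (R : realType) (n : nat) (z : 'rV[R[i]]_n) : 'rV[R]_(n + n) :=
  row_mx (\row_j complex.Re (z 0 j)) (\row_j complex.Im (z 0 j)).
Definition complexify (R : realType) (n : nat) (w : 'rV[R]_(n + n)) : 'rV[R[i]]_n :=
  \row_j (Complex ((lsubmx w) 0 j) ((rsubmx w) 0 j) : R[i]).

Arguments realify {R n}.
Arguments complexify {R n}.
Arguments monomial {R n}.
Arguments torus {R n}.
Arguments complement {R m n}.

Fixpoint iterD (R : realType) (V W : normedModType R) (vs : seq V) (f : V -> W)
  : V -> W :=
  match vs with
  | [::] => f
  | v :: vs' => 'D_v (iterD vs' f)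
  end.

Definition smooth_on (R : realType) (V W : normedModType R) (U : set V)
  (f : V -> W) : Prop :=
  open U /\
  forall vs : seq V,
    (forall x, U x -> {for x, continuous (iterD vs f)}) /\
    (forall x v, U x -> derivable (iterD vs f) x v).

Definition diffeomorphic (R : realType) (n : nat) (A B : set 'rV[R[i]]_n) : Prop :=
  exists (f g : 'rV[R[i]]_n -> 'rV[R[i]]_n),
    (forall z, A z -> B (f z)) /\ (forall z, B z -> A (g z)) /\
    (forall z, A z -> g (f z) = z) /\ (forall z, B z -> f (g z) = z) /\
    smooth_on (realify @` A) (fun w => realify (f (complexify w))) /\
    smooth_on (realify @` B) (fun w => realify (g (complexify w))).

Definition int_to_rat (x : int) : rat := x%:~R.

(* Main.v *)
Require Import Defs.
From HB Require Import structures.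
From mathcomp Require Import all_boot all_order all_algebra.
From mathcomp Require Import all_classical all_reals all_analysis.
From mathcomp Require Import complex.
From mathcomp Require Import ring.
Import Order.TTheory GRing.Theory Num.Theory.
Local Open Scope ring_scope.
Set Implicit Arguments. Unset Strict Implicit. Unset Printing Implicit Defensive.
Section Alg.
Variable R : realType.
Local Notation C := (R[i]).

Definition mexp a b (M : 'M[int]_(a,b)) (x : 'rV[C]_b) : 'rV[C]_a :=
  \row_i \prod_j x 0 j ^ M i j.
Definition nz b (x : 'rV[C]_b) := forall j, x 0 j != 0.

Lemma mexp_nz a b (M : 'M[int]_(a,b)) x : nz x -> nz (mexp M x).
Proof. by move=> hx j; rewrite mxE; apply/prodf_neq0 => k _; exact: expfz_neq0. Qed.

Lemma expz_sum (x : C) I (r : seq I) (P : pred I) (f : I -> int) : x != 0 ->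
  x ^ (\sum_(l <- r | P l) f l) = \prod_(l <- r | P l) x ^ f l.
Proof. by move=> hx; apply: (big_morph (fun k => x ^ k) (fun m n => expfzDr m n hx) (expr0z x)). Qed.

Lemma prod_expz I (r : seq I) (P : pred I) (f : I -> C) (k : int) :
  (\prod_(l <- r | P l) f l) ^ k = \prod_(l <- r | P l) f l ^ k.
Proof. by apply: (big_morph (fun y : C => y ^ k) (fun a b => expfzMl a b k) (exp1rz _ k)). Qed.

Lemma mexpM a b c (A : 'M[int]_(a,b)) (B : 'M[int]_(b,c)) x :
  nz x -> mexp (A *m B) x = mexp A (mexp B x).
Proof.
move=> hx; apply/rowP => i; rewrite !mxE.
under eq_bigr => j _ do rewrite mxE expz_sum //.
rewrite exchange_big /=; apply: eq_bigr => l _.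
rewrite mxE prod_expz; apply: eq_bigr => j _.
by rewrite exprz_exp mulrC.
Qed.

Lemma mexp1 b x : mexp (1%:M : 'M[int]_b) x = x.
Proof.
apply/rowP => i; rewrite mxE (bigD1 i) //= big1 ?mulr1.
  by rewrite mxE eqxx.
by move=> j hj; rewrite mxE eq_sym (negbTE hj).
Qed.

Definition rootz (k : int) (a : C) : C :=
  match k with Posz k => k.-root a | Negz k => k.+1.-root a^-1 end.

Lemma rootzK k a : k != 0 -> rootz k a ^ k = a.
Proof.
case: k => [[|k]|k] //= _.
  by rewrite -exprnP rootCK.
by rewrite NegzE -invr_expz -exprnP rootCK // invrK.
Qed.

Lemma rootz_neq0 k a : k != 0 -> a != 0 -> rootz k a != 0.
Proof.
move=> hk ha; apply/negP => /eqP h0; have := rootzK a hk; rewrite h0 => h.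
by move: ha; rewrite -h expfz_eq0 hk eqxx.
Qed.

Lemma solve_mon m n (hmn : (m <= n)%N) (P : 'M[int]_(m, n)) (alpha : 'rV[C]_m) :
  nz alpha -> row_free (map_mx int_to_rat P) ->
  exists c : 'rV[C]_n, nz c /\ mexp P c = alpha.
Proof.
move=> ha hfree.
have [L uL [Rm uR [d _ eP]]] := int_Smith_normal_form P.
set D := \matrix_(i, j) _ in eP.
have dnz : forall i : 'I_m, d`_i != 0.
  move=> i; apply/negP => /eqP di0.
  pose v : 'rV[int]_m := delta_mx 0 i.
  have vD : v *m D = 0.
    apply/rowP => j; rewrite !mxE (bigD1 i) //= big1 ?addr0.
      by rewrite !mxE di0 mul0rn mulr0.
    by move=> k hk; rewrite !mxE (negbTE hk) andbF mul0r.
  have h0 : (v *m invmx L) *m P = 0.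
    by rewrite eP !mulmxA -(mulmxA v) mulVmx // mulmx1 vD mul0mx.
  have : map_mx int_to_rat (v *m invmx L) = 0.
    apply: (row_free_inj hfree); rewrite /= mul0mx.
    by rewrite -map_mxM h0 map_mx0.
  move=> hm.
  have : v *m invmx L = 0.
    apply/rowP => j; move/rowP: hm => /(_ j); rewrite !mxE.
    by move/eqP; rewrite intr_eq0 => /eqP.
  move/(congr1 (mulmx^~ L)); rewrite -mulmxA mulVmx // mulmx1 mul0mx.
  by move/rowP => /(_ i); rewrite !mxE !eqxx.
pose a' := mexp (invmx L) alpha.
have ha' : nz a' by exact: mexp_nz.
pose u : 'rV[C]_n := \row_j (match (insub (val j) : option 'I_m) with Some i => rootz (d`_i) (a' 0 i) | None => 1 end).
have hu : nz u.
  move=> j; rewrite mxE; case: insubP => [i _ _|_]; last exact: oner_neq0.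
  exact: rootz_neq0.
have hD : mexp D u = a'.
  apply/rowP => i; rewrite mxE (bigD1 (widen_ord hmn i)) //= big1 ?mulr1.
    rewrite !mxE /= eqxx mulr1n.
    by rewrite valK rootzK // /a' mxE.
  move=> j hj; rewrite !mxE.
  have -> : (i == j :> nat) = false.
    by apply/negbTE/negP => /eqP hij; move/eqP: hj; apply; apply: val_inj.
  by rewrite mulr0n expr0z.
have hc : nz (mexp (invmx Rm) u) by exact: mexp_nz.
have hRc : mexp Rm (mexp (invmx Rm) u) = u by rewrite -mexpM // mulmxV // mexp1.
exists (mexp (invmx Rm) u); split => //.
by rewrite eP mexpM // hRc mexpM // hD /a' -mexpM // mulmxV // mexp1.
Qed.
End Alg.

Import numFieldNormedType.Exports.
Set Implicit Arguments. Unset Strict Implicit. Unset Printing Implicit Defensive.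
Local Open Scope classical_set_scope.
Section An.
Variable R : realType.
Variable n : nat.
Local Notation C := (R[i]).
Local Notation V := ('rV[R]_(n + n)).

Definition cmul (c z : 'rV[C]_n) : 'rV[C]_n := \row_j (c 0 j * z 0 j).
Definition Fc (c : 'rV[C]_n) (w : V) : V := realify (cmul c (complexify w)).

Lemma realifyK (z : 'rV[C]_n) : complexify (realify z) = z.
Proof.
apply/rowP => j; rewrite /complexify /realify mxE row_mxKl row_mxKr !mxE.
by case: (z 0 j).
Qed.

Lemma complexifyK (w : V) : realify (complexify w) = w.
Proof.
rewrite /complexify /realify -[RHS]hsubmxK; congr row_mx; apply/rowP => j;
by rewrite !mxE.
Qed.

Lemma complexifyE (w : V) j :
  complexify w 0 j = Complex (w 0 (lshift n j)) (w 0 (rshift n j)).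
Proof. by rewrite /complexify !mxE. Qed.

Lemma FcEl c w j : Fc c w 0 (lshift n j) =
  complex.Re (c 0 j) * w 0 (lshift n j) - complex.Im (c 0 j) * w 0 (rshift n j).
Proof.
rewrite /Fc /realify row_mxEl !mxE.
by case: (c 0 j) => a b /=.
Qed.

Lemma FcEr c w j : Fc c w 0 (rshift n j) =
  complex.Re (c 0 j) * w 0 (rshift n j) + complex.Im (c 0 j) * w 0 (lshift n j).
Proof.
rewrite /Fc /realify row_mxEr !mxE.
by case: (c 0 j) => a b /=; rewrite addrC.
Qed.

Lemma addE (A B : V) k : (A + B) 0 k = A 0 k + B 0 k. Proof. by rewrite mxE. Qed.
Lemma scaleE h (A : V) k : (h *: A) 0 k = h * A 0 k. Proof. by rewrite mxE. Qed.

Lemma Fc_lin c (h : R) (v x : V) : Fc c (h *: v + x) = h *: Fc c v + Fc c x.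
Proof.
apply/rowP => k; rewrite -(splitK k); case: (fintype.split k) => j /=.
  rewrite FcEl !addE !scaleE !FcEl; ring.
rewrite FcEr !addE !scaleE !FcEr; ring.
Qed.


Lemma mx_cont {T : topologicalType} p (f : T -> 'rV[R]_p) x :
  (forall k, {for x, continuous (fun y => f y 0 k)}) -> {for x, continuous f}.
Proof.
move=> h A /nbhs_ballP [e e0 eA].
have : \forall y \near x, forall k, ball (f x 0 k) e (f y 0 k).
  apply: filter_forall => k; exact: (h k) _ (nbhsx_ballx _ _ e0).
apply: filterS => y hy; apply: eA; split => // i j; rewrite (ord1 i); exact: hy j.
Qed.

Lemma Fc_cont c : continuous (Fc c).
Proof.
move=> x; apply: mx_cont => k; rewrite -(splitK k); case: (fintype.split k) => j /=.
  have -> : (fun y => Fc c y 0 (lshift n j)) = (fun y => complex.Re (c 0 j) * y 0 (lshift n j) - complex.Im (c 0 j) * y 0 (rshift n j)).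
    by apply/funext => y; rewrite FcEl.
  apply: continuousB; apply: continuousM; (exact: cst_continuous || exact: coord_continuous).
have -> : (fun y => Fc c y 0 (rshift n j)) = (fun y => complex.Re (c 0 j) * y 0 (rshift n j) + complex.Im (c 0 j) * y 0 (lshift n j)).
  by apply/funext => y; rewrite FcEr.
apply: continuousD; apply: continuousM; (exact: cst_continuous || exact: coord_continuous).
Qed.

Lemma Fc_derive c x v : is_derive x v (Fc c) (Fc c v).
Proof.
have hq : (fun h : R => h^-1 *: ((Fc c \o shift x) (h *: v) - Fc c x)) @ 0^' --> Fc c v.
  apply: cvg_near_cst; near=> h.
  rewrite /= Fc_lin addrK scalerA mulVf ?scale1r //; near: h; exact: nbhs_dnbhs_neq.
split; [exact: cvgP hq | exact: cvg_lim hq].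
Unshelve. all: by end_near.
Qed.

Lemma iterD_Fc c (vs : seq V) : Defs.iterD vs (Fc c) = Fc c \/ exists a, Defs.iterD vs (Fc c) = cst a.
Proof.
elim: vs => [|v vs IH] /=; first by left.
right; case: IH => [->|[a ->]].
  by exists (Fc c v); apply/funext => x; case: (Fc_derive c x v).
by exists 0; apply/funext => x; exact: derive_cst.
Qed.

Lemma Fc_smooth c U : open U -> smooth_on U (Fc c).
Proof.
move=> oU; split=> // vs; split => [x _ | x v _].
  by case: (iterD_Fc c vs) => [->|[a ->]]; [exact: Fc_cont | exact: cst_continuous].
case: (iterD_Fc c vs) => [->|[a ->]]; last exact: derivable_cst.
by case: (Fc_derive c x v).
Qed.


Lemma rc_cont : continuous (fun r : R => (r%:C)%C : (R[i] : numFieldType)).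
Proof.
move=> r; apply/cvgrPdist_lt => e e0.
move: e0; rewrite ltcE => /andP [ie e0] /=.
have : \forall t \near r, `|r - t| < complex.Re e.
  exact: (@cvgrPdist_lt _ _ _ _ _ (fun t : R => t) r).1 (@cvg_id _ _) _ e0.
apply: filterS => t ht.
rewrite -rmorphB normc_def /= expr0n /= addr0 sqrtr_sqr ltcE /=.
by rewrite ht andbT.
Qed.

Local Notation CN := (R[i] : numFieldType).

Lemma complex_cont {T : topologicalType} (f g : T -> R) x :
  {for x, continuous f} -> {for x, continuous g} ->
  {for x, continuous (fun y => Complex (f y) (g y) : CN)}.
Proof.
move=> hf hg.
have -> : (fun y => Complex (f y) (g y) : CN) =
    (fun y => ((f y)%:C)%C + ((g y)%:C)%C * ('i)%C).
  apply/funext => y; apply/eqP; rewrite eq_complex /=; apply/andP; split; apply/eqP; ring.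
apply: continuousD.
  exact: (continuous_comp hf (@rc_cont (f x))).
apply: continuousM; last exact: cst_continuous.
exact: (continuous_comp hg (@rc_cont (g x))).
Qed.

Lemma cz_cont j : continuous (fun w : V => complexify w 0 j : CN).
Proof.
move=> w.
have -> : (fun w : V => complexify w 0 j : CN) =
   (fun w : V => Complex (w 0 (lshift n j)) (w 0 (rshift n j)) : CN).
  by apply/funext => y; rewrite complexifyE.
apply: complex_cont; exact: coord_continuous.
Qed.

Lemma powN_cont {T : topologicalType} (f : T -> CN) x (m : nat) :
  {for x, continuous f} -> {for x, continuous (fun y => f y ^+ m)}.
Proof.
move=> hf; elim: m => [|m IH].
  Timeout 10 have -> : (fun y => f y ^+ 0) = (fun _ => 1) by apply/funext => y; rewrite expr0.
  Timeout 10 exact: cst_continuous.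
Timeout 10 have -> : (fun y => f y ^+ m.+1) = (fun y => f y * f y ^+ m).
  by apply/funext => y; rewrite exprS.
Timeout 20 exact: (@continuousM _ _ f (fun y => f y ^+ m) x hf IH).
Qed.
Lemma pow_cont {T : topologicalType} (f : T -> CN) x (k : int) :
  f x != 0 -> {for x, continuous f} -> {for x, continuous (fun y => f y ^ k)}.
Proof.
move=> hx hf; case: k => m; first exact: powN_cont.
have hn : f x ^+ m.+1 != 0 by rewrite expf_neq0.
have -> : (fun y => f y ^ Negz m) = (fun y => (f y ^+ m.+1)^-1) by [].
exact: (@continuousV _ _ (fun y => f y ^+ m.+1) x hn (powN_cont (m:=m.+1) hf)).
Qed.

Lemma prod_cont {T : topologicalType} (I : Type) (s : seq I) (g : I -> T -> CN) x :
  (forall i, {for x, continuous (g i)}) ->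
  {for x, continuous (fun y => \prod_(i <- s) g i y)}.
Proof.
move=> hg; elim: s => [|a s IH].
  have -> : (fun y => \prod_(i <- [::]) g i y) = (fun _ => 1) by apply/funext => y; rewrite big_nil.
  exact: cst_continuous.
have -> : (fun y => \prod_(i <- a :: s) g i y) = (fun y => g a y * \prod_(i <- s) g i y).
  by apply/funext => y; rewrite big_cons.
exact: (@continuousM _ _ (g a) (fun y => \prod_(i <- s) g i y) x (hg a) IH).
Qed.

Lemma mon_cont (p : 'rV[int]_n) (w : V) : torus (complexify w) ->
  {for w, continuous (fun w : V => monomial p (complexify w) : CN)}.
Proof.
move=> ht; rewrite /monomial; apply: prod_cont => j.
apply: pow_cont; [exact: ht | exact: cz_cont].
Qed.

Lemma open_compl m (P : 'M[int]_(m, n)) (alpha : 'I_m -> C) :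
  open (realify @` complement P alpha).
Proof.
have -> : realify @` complement P alpha = [set w | complement P alpha (complexify w)].
  apply/seteqP; split => [w [z hz <-]|w hw]; first by rewrite /= realifyK.
  by exists (complexify w) => //; rewrite complexifyK.
rewrite openE => w [ht hm].
have h1 : \forall y \near w, forall j, complexify y 0 j != 0.
  apply: (@filter_forall _ _ (fun j y => complexify y 0 j != 0) (nbhs w) _) => j.
  exact: (cvgr_neq0 _ (@cz_cont j w) (ht j)).
have h2 : \forall y \near w, forall i, monomial (row i P) (complexify y) != alpha i.
  apply: (@filter_forall _ _ (fun i y => monomial (row i P) (complexify y) != alpha i) (nbhs w) _) => i.
  have hc : (fun y : V => monomial (row i P) (complexify y) - alpha i : CN) @ w -->
      (monomial (row i P) (complexify w) - alpha i : CN).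
    exact: cvgB (mon_cont (p:=row i P) ht) (cvg_cst (alpha i : CN)).
  have hm' : (monomial (row i P) (complexify w) - alpha i : CN) != 0 by rewrite subr_eq0.
  have H : \forall t \near w, (monomial (row i P) (complexify t) - alpha i : CN) != 0.
    exact: cvgr_neq0 _ hc hm'.
  by apply: (filterS _ H) => y /=; rewrite subr_eq0.
near=> y; split; [near: y; exact: h1 | near: y; exact: h2].
Unshelve. all: by end_near.
Qed.

End An.

Lemma mon_mul (R : realType) n (p : 'rV[int]_n) (d z : 'rV[R[i]]_n) :
  monomial p (cmul d z) = monomial p d * monomial p z.
Proof. by rewrite /monomial -big_split; apply: eq_bigr => j _; rewrite !mxE expfzMl. Qed.

Theorem theorem2p1 (R : realType) (n m : nat) (hm : (1 <= m)%N) (hmn : (m <= n)%N)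
  (P : 'M[int]_(m, n)) (alpha : 'I_m -> R[i])
  (halpha : forall i, alpha i != 0)
  (hrank : \rank (map_mx int_to_rat P) = m) :
  exists Q : 'M[int]_(m, n),
    diffeomorphic (complement P alpha) (complement Q (fun _ => 1)).
Proof.
have hfree : row_free (map_mx int_to_rat P) by rewrite /row_free hrank.
pose al : 'rV[R[i]]_m := \row_i alpha i.
have hal : nz al by move=> i; rewrite mxE.
have [c [hc hcP]] := solve_mon hmn hal hfree.
pose ci : 'rV[R[i]]_n := \row_j (c 0 j)^-1.
have hci : nz ci by move=> j; rewrite mxE invr_eq0.
have monc : forall i, monomial (row i P) c = alpha i.
  move=> i; move/rowP: hcP => /(_ i); rewrite !mxE => <-.
  by rewrite /monomial; apply: eq_bigr => j _; rewrite mxE.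
have monci : forall i, monomial (row i P) ci = (alpha i)^-1.
  move=> i; apply: (mulIf (halpha i)); rewrite mulVf // -{1}(monc i) -mon_mul.
  rewrite /monomial big1 // => j _; rewrite !mxE mulVf ?hc //; exact: exp1rz.
exists P, (cmul ci), (cmul c); split; [|split; [|split; [|split; [|split]]]].
- move=> z [ht hz]; split.
    by move=> j; rewrite mxE mulf_neq0.
  move=> i; rewrite mon_mul monci; apply/eqP => h; move/eqP: (hz i); apply.
  by rewrite -[LHS](mulVKf (halpha i)) h mulr1.
- move=> z [ht hz]; split.
    by move=> j; rewrite mxE mulf_neq0.
  move=> i; rewrite mon_mul monc; apply/eqP => h; move/eqP: (hz i); apply.
  by apply: (mulfI (halpha i)); rewrite h mulr1.
- by move=> z _; apply/rowP => j; rewrite !mxE mulVKf ?hc.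
- by move=> z _; apply/rowP => j; rewrite !mxE mulKf ?hc.
- by apply: Fc_smooth; exact: open_compl.
- by apply: Fc_smooth; exact: open_compl.
Qed.
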